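(* Let $f\colon\mathbb{R}^n\to\mathbb{R}$ be a strictly convex quadratic function, i.e. $f(x)=\tfrac12 x^TAx+b^Tx+c$ with $A$ symmetric positive definite, and let $x\in\mathbb{R}^n$ with $g=\nabla f(x)\neq 0$. For any initial symmetric positive definite matrix $H$, the procedure ''while $f(x-Hg)\ge f(x)$, replace $H$ by its unit-step BFGS update at $x$'' terminates after finitely many iterations.
   Context: For a $\mathcal{C}^1$-smooth convex $f\colon\mathbb{R}^n\to\mathbb{R}$, a point $x$ with $g=\nabla f(x)$, and a symmetric positive definite $H$, the unit-step BFGS update $H_+$ is: $s=-Hg$, $x_+=x+s$, $g_+=\nabla f(x_+)$, $y=g_+-g$, $V=I-\frac{sy^T}{s^Ty}$, $H_+=VHV^T+\frac{ss^T}{s^Ty}$ (defined when $s^Ty\ne0$, which holds automatically for strictly convex $f$ and $g\neq 0$). The point $x$ (and hence $g$) remains fixed during the procedure. *)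

(* Defs.v *)
From mathcomp Require Import all_boot all_order all_algebra.
From mathcomp Require Import reals.
Set Implicit Arguments. Unset Strict Implicit. Unset Printing Implicit Defensive.
Import Order.TTheory GRing.Theory Num.Theory.
Local Open Scope ring_scope.

Section Defs.
Variables (R : realType) (n : nat).

Definition vdot (u v : 'cV[R]_n) : R := (u^T *m v) 0 0.

Definition sym_pd (A : 'M[R]_n) : Prop :=
  A^T = A /\ forall v : 'cV[R]_n, v != 0 -> 0 < vdot v (A *m v).

Definition quad (A : 'M[R]_n) (b : 'cV[R]_n) (c : R) (z : 'cV[R]_n) : R :=
  2^-1 * vdot z (A *m z) + vdot b z + c.

(* ... and its gradient (for symmetric A): grad f(z) = A z + b. *)
Definition quad_grad (A : 'M[R]_n) (b : 'cV[R]_n) (z : 'cV[R]_n) : 'cV[R]_n :=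
  A *m z + b.

Definition bfgs_update (grad : 'cV[R]_n -> 'cV[R]_n) (x : 'cV[R]_n)
    (H : 'M[R]_n) : 'M[R]_n :=
  let g := grad x in
  let s := - (H *m g) in
  let y := grad (x + s) - g in
  let sy := vdot s y in
  let V := 1%:M - sy^-1 *: (s *m y^T) in
  V *m H *m V^T + sy^-1 *: (s *m s^T).

End Defs.

(* Main.v *)
Require Import Defs.
From mathcomp Require Import all_boot all_order all_algebra.
From mathcomp Require Import reals.
From mathcomp Require Import fingroup perm.
From mathcomp Require Import ring lra.
Set Implicit Arguments. Unset Strict Implicit. Unset Printing Implicit Defensive.
Import Order.TTheory GRing.Theory Num.Theory.
Local Open Scope ring_scope.

Section Basic.
Variables (R : realType) (n : nat).
Implicit Types (u v w : 'cV[R]_n) (M : 'M[R]_n).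
Local Notation vdot := (@vdot R n).

Lemma vdotC u v : vdot u v = vdot v u.
Proof.
rewrite /vdot -[(v^T *m u)]trmxK trmx_mul trmxK [in RHS]mxE.
by [].
Qed.

Lemma vdotDr u v w : vdot u (v + w) = vdot u v + vdot u w.
Proof. by rewrite /vdot mulmxDr mxE. Qed.
Lemma vdotDl u v w : vdot (v + w) u = vdot v u + vdot w u.
Proof. by rewrite vdotC vdotDr !(vdotC u). Qed.
Lemma vdotZr a u v : vdot u (a *: v) = a * vdot u v.
Proof. by rewrite /vdot -scalemxAr mxE. Qed.
Lemma vdotZl a u v : vdot (a *: v) u = a * vdot v u.
Proof. by rewrite vdotC vdotZr vdotC. Qed.
Lemma vdotNr u v : vdot u (- v) = - vdot u v.
Proof. by rewrite -scaleN1r vdotZr mulN1r. Qed.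
Lemma vdotNl u v : vdot (- v) u = - vdot v u.
Proof. by rewrite vdotC vdotNr vdotC. Qed.
Lemma vdotBr u v w : vdot u (v - w) = vdot u v - vdot u w.
Proof. by rewrite vdotDr vdotNr. Qed.
Lemma vdotBl u v w : vdot (v - w) u = vdot v u - vdot w u.
Proof. by rewrite vdotDl vdotNl. Qed.
Lemma vdot0r u : vdot u 0 = 0.
Proof. by rewrite /vdot mulmx0 mxE. Qed.
Lemma vdot0l u : vdot 0 u = 0.
Proof. by rewrite vdotC vdot0r. Qed.
Lemma vdot_mulmx u M v : vdot u (M *m v) = vdot (M^T *m u) v.
Proof. by rewrite /vdot mulmxA trmx_mul trmxK. Qed.

Lemma mul_outer u v w : u *m v^T *m w = vdot v w *: u.
Proof. by rewrite -mulmxA [v^T *m w]mx11_scalar mul_mx_scalar. Qed.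
Lemma mul_outerl u v w : w^T *m (u *m v^T) = vdot w u *: v^T.
Proof.
by rewrite mulmxA [w^T *m u]mx11_scalar mul_scalar_mx.
Qed.
Lemma tr_outer u v : \tr (u *m v^T) = vdot v u.
Proof. by rewrite mxtrace_mulC trace_mx11. Qed.

Lemma vdot_ge0 u : 0 <= vdot u u.
Proof.
rewrite /vdot mxE; apply: sumr_ge0 => i _; rewrite mxE -expr2; exact: sqr_ge0.
Qed.

Lemma vdot_sum u v : vdot u v = \sum_i u i 0 * v i 0.
Proof. by rewrite /vdot mxE; apply: eq_bigr => i _; rewrite mxE. Qed.

Lemma vdot_deltal i w : vdot (delta_mx i 0) w = w i 0.
Proof. by rewrite /vdot trmx_delta -rowE mxE. Qed.

Lemma delta_neq0 (i : 'I_n) : (delta_mx i 0 : 'cV[R]_n) != 0.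
Proof.
apply/negP => /eqP/matrixP/(_ i 0); rewrite !mxE !eqxx /= => /eqP.
by rewrite oner_eq0.
Qed.


Lemma pd_ge0 M w : sym_pd M -> 0 <= vdot w (M *m w).
Proof.
case=> _ pd; have [->|w0] := eqVneq w 0; first by rewrite mulmx0 vdot0r.
exact/ltW/pd.
Qed.

Lemma vdot_delta2 M i j : vdot (delta_mx i 0) (M *m delta_mx j 0) = M i j.
Proof. by rewrite vdot_deltal -colE mxE. Qed.

Lemma pd_diag M i : sym_pd M -> 0 < M i i.
Proof. by case=> _ pd; rewrite -vdot_delta2; apply/pd/delta_neq0. Qed.

Lemma sym_swap M u v : M^T = M -> vdot v (M *m u) = vdot u (M *m v).
Proof. by move=> sM; rewrite vdot_mulmx sM vdotC. Qed.

Lemma pd_CS M u v : sym_pd M ->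
  vdot u (M *m v) ^+ 2 <= vdot u (M *m u) * vdot v (M *m v).
Proof.
move=> pdM; have [->|v0] := eqVneq v 0.
  by rewrite mulmx0 vdot0r expr0n /= vdot0l mulr0.
have c0 : 0 < vdot v (M *m v) by case: pdM => _ pd; exact: pd.
set a := vdot u (M *m u); set b := vdot u (M *m v); set c := vdot v (M *m v).
pose t := - b / c.
have := pd_ge0 (u + t *: v) pdM.
rewrite mulmxDr -scalemxAr vdotDl !vdotDr !vdotZl !vdotZr.
rewrite (sym_swap _ _ pdM.1) -/a -/b -/c => h.
have tc : t * c = - b by rewrite /t divfK // gt_eqF.
have h2 : 0 <= a + t * b.
  by move: h; rewrite tc; nra.
have h3 : 0 <= (a + t * b) * c by apply: mulr_ge0 => //; exact: ltW.
have e : (a + t * b) * c = a * c - b ^+ 2 by rewrite mulrDl mulrAC tc; ring.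
by rewrite e subr_ge0 in h3.
Qed.

Lemma diag_le_tr M i : sym_pd M -> M i i <= \tr M.
Proof.
move=> pdM; rewrite /mxtrace (bigD1 i) //= lerDl.
by apply: sumr_ge0 => j _; exact/ltW/pd_diag.
Qed.

Lemma tr_ge0 M : sym_pd M -> 0 <= \tr M.
Proof. by move=> pdM; apply: sumr_ge0 => j _; exact/ltW/pd_diag. Qed.

Lemma entry_le_tr M i j : sym_pd M -> `|M i j| <= \tr M.
Proof.
move=> pdM.
have := pd_CS (delta_mx i 0) (delta_mx j 0) pdM; rewrite !vdot_delta2 => h.
have hi := diag_le_tr i pdM; have hj := diag_le_tr j pdM.
have pi := pd_diag i pdM; have pj := pd_diag j pdM.
rewrite ler_norml; apply/andP; split; nra.
Qed.

Lemma CS_tr M s : sym_pd M ->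
  vdot (M *m s) (M *m s) <= \tr M * vdot s (M *m s).
Proof.
move=> pdM; rewrite vdot_sum /mxtrace mulr_suml; apply: ler_sum => i _.
have := pd_CS (delta_mx i 0) s pdM; rewrite vdot_delta2 vdot_deltal -expr2.
done.
Qed.

Lemma det_bound M c : (forall i j, `|M i j| <= c) ->
  `|\det M| <= c ^+ n *+ #|{perm 'I_n}|.
Proof.
move=> hc; rewrite /determinant; apply: le_trans (ler_norm_sum _ _ _) _.
rewrite -sumr_const; apply: ler_sum => s _.
rewrite normrM normrX normrN1 expr1n mul1r normr_prod.
have -> : c ^+ n = \prod_(i < n) c by rewrite prodr_const card_ord.
apply: ler_prod => i _.
by rewrite normr_ge0 hc.
Qed.

End Basic.
Lemma det_rank1 (R : realType) (n : nat) (s q : 'cV[R]_n) :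
  \det (1%:M - s *m q^T) = 1 - vdot q s.
Proof.
pose X := block_mx (1%:M : 'M[R]_n) s 0 (1%:M : 'M_1).
pose Y := block_mx (1%:M - s *m q^T) 0 q^T (1%:M : 'M_1).
pose Z := block_mx (1%:M : 'M[R]_n) 0 q^T (1%:M : 'M_1).
pose W := block_mx (1%:M : 'M[R]_n) s 0 (1%:M - q^T *m s : 'M_1).
have e : X *m Y = Z *m W.
  rewrite /X /Y /Z /W !mulmx_block !mul1mx !mulmx1 !mul0mx ?mulmx0 ?add0r ?addr0.
  by rewrite subrK addrC subrK.
have := congr1 determinant e.
rewrite !det_mulmx /X /Y /Z /W det_ublock det_lblock det_lblock det_ublock !det1 !mul1r mulr1.
by move=> ->; rewrite det_mx11 /vdot !mxE eqxx.
Qed.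

Section Step.
Variables (R : realType) (n : nat).

Lemma step (A H B : 'M[R]_n) (g : 'cV[R]_n) :
  sym_pd A -> sym_pd H -> B *m H = 1%:M -> g != 0 -> \det H != 0 ->
  let s := - (H *m g) in let y := A *m s in let sg := vdot s y in
  let V := 1%:M - sg^-1 *: (s *m y^T) in
  2 * vdot g (H *m g) <= sg ->
  let Hp := V *m H *m V^T + sg^-1 *: (s *m s^T) in
  [/\ sym_pd Hp, \det Hp != 0, 2 * `|\det Hp| <= `|\det H| &
   exists Bp, Bp *m Hp = 1%:M /\ \tr Bp <= \tr B + \tr A].
Proof.
move=> pdA pdH BH g0 dH s y sg V fail Hp.
have HB : H *m B = 1%:M := mulmx1C BH.
have sH : H^T = H := pdH.1.
have sA : A^T = A := pdA.1.
have sB : B^T = B.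
  have : (H *m B)^T = 1%:M by rewrite HB trmx1.
  rewrite trmx_mul sH => BtH.
  by rewrite -[B^T]mulmx1 -HB mulmxA BtH mul1mx.
set h := vdot g (H *m g).
have h0 : 0 < h by apply: pdH.2.
have vgs : vdot g s = - h by rewrite /s vdotNr.
have vsg : vdot s g = - h by rewrite vdotC.
have s0 : s != 0.
  apply/negP => /eqP s0; move: vgs; rewrite s0 vdot0r => /eqP.
  by rewrite eq_sym oppr_eq0 gt_eqF.
have sg0 : 0 < sg by apply: pdA.2.
have vys : vdot y s = sg by rewrite vdotC.
have Hg : H *m g = - s by rewrite /s opprK.
have Bs : B *m s = - g by rewrite /s mulmxN mulmxA BH mul1mx.
have sTB : s^T *m B = - g^T.
  by rewrite -[B]sB -trmx_mul Bs linearN.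
have gTH : g^T *m H = - s^T.
  by rewrite -[H]sH -trmx_mul Hg linearN.
pose beta := Num.sqrt ((sg * h)^-1).
have bb : beta ^+ 2 = (sg * h)^-1.
  by rewrite sqr_sqrtr // invr_ge0 mulr_ge0 // ltW.
have b0 : 0 < beta by rewrite sqrtr_gt0 invr_gt0 mulr_gt0.
have bh : beta ^+ 2 * h = sg^-1.
  by rewrite bb invfM -mulrA mulVf ?mulr1 // gt_eqF.
pose q := sg^-1 *: y - beta *: g.
pose E := 1%:M - s *m q^T.
have qs : vdot q s = 1 + beta * h.
  by rewrite /q vdotBl !vdotZl vys vgs mulVf ?gt_eqF // mulrN opprK.
have Es : E *m s = - (beta * h) *: s.
  rewrite /E mulmxBl mul1mx mul_outer qs.
  by rewrite scaleNr -{1}[s]scale1r -scalerBl opprD addrA subrr sub0r scaleNr.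
have Vs : V *m s = 0.
  rewrite /V mulmxBl mul1mx -scalemxAl mul_outer vys scalerA mulVf ?gt_eqF //.
  by rewrite scale1r subrr.
have VHg : V *m H *m g = 0 by rewrite -mulmxA Hg mulmxN Vs oppr0.
have EV : E = V + beta *: (s *m g^T).
  rewrite /E /V /q linearB /= !linearZ /= mulmxDr -!scalemxAr mulmxN.
  by apply/matrixP => i j; rewrite !mxE; ring.
clearbody V.
have EH : E *m H = V *m H - beta *: (s *m s^T).
  by rewrite EV mulmxDl -scalemxAl -mulmxA gTH mulmxN scalerN.
have ET : E^T = V^T + beta *: (g *m s^T).
  by rewrite EV linearD /= linearZ /= trmx_mul trmxK.
have HpE : Hp = E *m H *m E^T.
  rewrite EH ET mulmxDr !mulmxBl.
  have t1 : (beta *: (s *m s^T)) *m V^T = 0.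
    by rewrite -scalemxAl -mulmxA -trmx_mul Vs trmx0 mulmx0 scaler0.
  have t2 : V *m H *m (beta *: (g *m s^T)) = 0.
    by rewrite -scalemxAr mulmxA VHg mul0mx scaler0.
  have t3 : (beta *: (s *m s^T)) *m (beta *: (g *m s^T)) = - (sg^-1 *: (s *m s^T)).
    rewrite -scalemxAl -scalemxAr scalerA mulmxA mul_outer -scalemxAl scalerA vsg.
    by rewrite -expr2 mulrN bh scaleNr.
  by rewrite t1 t2 t3 subr0 sub0r opprK.
have ET' : E^T = 1%:M - q *m s^T by rewrite /E linearB /= trmx1 trmx_mul trmxK.
have ETv (v : 'cV[R]_n) : v != 0 -> E^T *m v != 0.
  move=> v0; apply/negP => /eqP ev.
  have : vdot s (E^T *m v) = 0 by rewrite ev vdot0r.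
  rewrite ET' mulmxBl mul1mx mul_outer vdotBr vdotZr (vdotC s q) qs => e1.
  have sv0 : vdot s v = 0.
    have : (beta * h) * vdot s v = - (vdot s v - vdot s v * (1 + beta * h)) by ring.
    rewrite e1 oppr0 => /eqP; rewrite mulf_eq0 (gt_eqF (mulr_gt0 b0 h0)) /=.
    by move/eqP.
  move: ev; rewrite ET' mulmxBl mul1mx mul_outer sv0 scale0r subr0 => /eqP.
  by rewrite (negbTE v0).
have pdHp : sym_pd Hp.
  split; first by rewrite HpE !trmx_mul trmxK sH mulmxA.
  move=> v v0; rewrite HpE -!mulmxA vdot_mulmx; apply: pdH.2; exact: ETv.
have detHp : \det Hp = sg^-1 * h * \det H.
  rewrite HpE !det_mulmx det_tr /E det_rank1 qs.
  have k : (1 - (1 + beta * h)) * (1 - (1 + beta * h)) = sg^-1 * h by rewrite -bh; ring.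
  by rewrite mulrAC k.
pose Bp := B - h^-1 *: (g *m g^T) + sg^-1 *: (y *m y^T).
have sBp : s^T *m Bp = y^T.
  rewrite /Bp mulmxDr mulmxBr sTB -!scalemxAr !mul_outerl vsg -/sg !scalerA.
  rewrite mulrN mulVf ?gt_eqF // mulVf ?gt_eqF // scaleNr !scale1r opprK.
  by rewrite addNr add0r.
have ETBp : E^T *m Bp = B - h^-1 *: (g *m g^T) + beta *: (g *m y^T).
  rewrite ET' mulmxBl mul1mx -mulmxA sBp /q mulmxBl -!scalemxAl /Bp.
  by apply/matrixP => i j; rewrite !mxE; ring.
have HETBp : H *m (E^T *m Bp) = 1%:M + h^-1 *: (s *m g^T) - beta *: (s *m y^T).
  rewrite ETBp !mulmxDr mulmxN HB -!scalemxAr !mulmxA Hg !mulNmx.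
  by apply/matrixP => i j; rewrite !mxE; ring.
have HpBp : Hp *m Bp = 1%:M.
  rewrite HpE -!mulmxA HETBp !mulmxDr mulmxN mulmx1 -!scalemxAr !mulmxA Es.
  rewrite -!scalemxAl !scalerA /E /q linearB /= !linearZ /= ?raddfN /= !mulmxDr -!scalemxAr ?mulmxN.
  rewrite -bh ?mulmxN -!scalemxAr ?mulmxN.
  have -> : h^-1 * - (beta * h) = - beta by rewrite mulrN mulrCA mulVf ?mulr1 // gt_eqF.
  by apply/matrixP => i j; rewrite !mxE; ring.
split => //.
- by rewrite detHp !mulf_neq0 // ?invr_eq0 gt_eqF.
- have r1 : sg^-1 * sg = 1 by rewrite mulVf // gt_eqF.
  have r0 : 0 < sg^-1 by rewrite invr_gt0.
  rewrite detHp !normrM (ger0_norm (ltW h0)) (ger0_norm (ltW r0)).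
  have k : 2 * (sg^-1 * h) <= 1.
    by have := ler_wpM2l (ltW r0) fail; rewrite r1 mulrCA.
  by have := ler_wpM2r (normr_ge0 (\det H)) k; rewrite mul1r !mulrA.
exists Bp; split; first exact: mulmx1C.
rewrite /Bp mxtraceD raddfB /= !mxtraceZ !tr_outer.
have cs : vdot y y <= \tr A * sg by exact: CS_tr.
have k1 : sg^-1 * vdot y y <= \tr A.
  have : sg^-1 * vdot y y <= sg^-1 * (\tr A * sg) by rewrite ler_pM2l // invr_gt0.
  by rewrite mulrCA mulVf ?mulr1 // gt_eqF.
have k2 : 0 <= h^-1 * vdot g g by apply: mulr_ge0; [rewrite invr_ge0 ltW | exact: vdot_ge0].
lra.
Qed.
End Step.

Lemma growth (R : realType) (n : nat) (D T a : R) :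
  0 <= D -> 0 <= T -> 0 <= a ->
  exists k : nat, D * (T + k%:R * a) ^+ n < 2 ^+ k.
Proof.
move=> D0 T0 a0.
pose C := T + n.+1%:R * a.
have C0 : 0 <= C by rewrite /C addr_ge0 // mulr_ge0.
pose j := Num.Def.archi_bound (D * C ^+ n).
have hj : D * C ^+ n < j%:R by apply: archi_boundP; rewrite mulr_ge0 // exprn_ge0.
exists (j * n.+1)%N.
have j0 : (0 : R) <= j%:R by [].
have e1 : T + (j * n.+1)%N%:R * a <= C * (j%:R + 1).
  rewrite natrM /C.
  have : 0 <= n.+1%:R * a by rewrite mulr_ge0.
  nra.
have e2 : (T + (j * n.+1)%N%:R * a) ^+ n <= C ^+ n * (j%:R + 1) ^+ n.
  rewrite -exprMn; apply: lerXn2r => //; rewrite nnegrE //.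
    by rewrite addr_ge0 // mulr_ge0.
  by rewrite mulr_ge0 // addr_ge0.
have e3 : D * (T + (j * n.+1)%N%:R * a) ^+ n <= D * C ^+ n * (j%:R + 1) ^+ n.
  by rewrite -mulrA ler_wpM2l.
apply: (le_lt_trans e3).
have p0 : 0 < (j%:R + 1 : R) ^+ n by rewrite exprn_gt0 // ltr_wpDl.
have e4 : D * C ^+ n * (j%:R + 1) ^+ n < (j%:R + 1) ^+ n.+1.
  rewrite exprS ltr_pM2r //; apply: (lt_le_trans hj).
  by rewrite lerDl.
apply: (lt_le_trans e4).
rewrite exprM; apply: lerXn2r; rewrite ?nnegrE ?addr_ge0 ?exprn_ge0 //.
have : (j.+1 <= 2 ^ j)%N by exact: ltn_expl.
rewrite -(ler_nat R) natrX => h.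
by apply: le_trans h; rewrite -natr1.
Qed.

Section Main.
Variables (R : realType) (n : nat).

Definition upd (A H : 'M[R]_n) (g : 'cV[R]_n) : 'M[R]_n :=
  let s := - (H *m g) in let y := A *m s in let sg := vdot s y in
  let V := 1%:M - sg^-1 *: (s *m y^T) in
  V *m H *m V^T + sg^-1 *: (s *m s^T).

Lemma step' (A H B : 'M[R]_n) (g : 'cV[R]_n) :
  sym_pd A -> sym_pd H -> B *m H = 1%:M -> g != 0 -> \det H != 0 ->
  2 * vdot g (H *m g) <= vdot (- (H *m g)) (A *m - (H *m g)) ->
  [/\ sym_pd (upd A H g), \det (upd A H g) != 0,
      2 * `|\det (upd A H g)| <= `|\det H| &
   exists Bp, Bp *m upd A H g = 1%:M /\ \tr Bp <= \tr B + \tr A].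
Proof. move=> pA pH BH g0 dH f; exact: (step pA pH BH g0 dH f). Qed.

Lemma bfgs_affine (grad : 'cV[R]_n -> 'cV[R]_n) (x : 'cV[R]_n) (M H : 'M[R]_n) :
  (forall s, grad (x + s) - grad x = M *m s) ->
  bfgs_update grad x H = upd M H (grad x).
Proof. by move=> hg; rewrite /bfgs_update /upd; cbv zeta; rewrite hg. Qed.

Lemma grad_diff (A : 'M[R]_n) b x s :
  quad_grad A b (x + s) - quad_grad A b x = A *m s.
Proof.
rewrite /quad_grad mulmxDr.
by apply/matrixP => i j; rewrite !mxE; ring.
Qed.

Lemma quad_step (A : 'M[R]_n) b c x s : A^T = A ->
  quad A b c (x + s) =
  quad A b c x + vdot (quad_grad A b x) s + 2^-1 * vdot s (A *m s).
Proof.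
move=> sA; rewrite /quad /quad_grad mulmxDr !vdotDl !vdotDr.
have e1 : vdot x (A *m s) = vdot (A *m x) s by rewrite vdot_mulmx sA.
have e2 : vdot s (A *m x) = vdot (A *m x) s by rewrite vdotC.
rewrite e1 e2; lra.
Qed.

Lemma pd_det_neq0 (M : 'M[R]_n) : sym_pd M -> \det M != 0.
Proof.
case=> sM pd; apply/negP => /det0P [v v0 vM].
have vT0 : v^T != 0.
  by apply: contra v0 => /eqP h; rewrite -[v]trmxK h trmx0.
have := pd _ vT0.
have -> : M *m v^T = 0 by rewrite -[M]sM -trmx_mul vM trmx0.
by rewrite vdot0r ltxx.
Qed.

Lemma inv_pd (M B : 'M[R]_n) : sym_pd M -> B *m M = 1%:M -> sym_pd B.
Proof.
move=> [sM pd] BM; have MB : M *m B = 1%:M := mulmx1C BM.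
split.
  have : (M *m B)^T = 1%:M by rewrite MB trmx1.
  rewrite trmx_mul sM => BtM.
  by rewrite -[B^T]mulmx1 -MB mulmxA BtM mul1mx.
move=> v v0.
have e : M *m (B *m v) = v by rewrite mulmxA MB mul1mx.
have Bv0 : B *m v != 0.
  by apply: contra v0 => /eqP h; rewrite -e h mulmx0.
by rewrite -{1}e vdotC; apply: pd.
Qed.

End Main.

Theorem mainTheorem4 (R : realType) (n : nat) (A : 'M[R]_n) (b : 'cV[R]_n)
    (c : R) (x : 'cV[R]_n) (H : 'M[R]_n) :
  sym_pd A -> quad_grad A b x != 0 -> sym_pd H ->
  exists k : nat,
    quad A b c (x - iter k (bfgs_update (quad_grad A b) x) H *m quad_grad A b x)
      < quad A b c x.
Proof.
move=> pdA g0 pdH.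
set g := quad_grad A b x.
set F := bfgs_update (quad_grad A b) x.
have eF : forall H', F H' = upd A H' g.
  by move=> H'; rewrite /F (bfgs_affine H' (grad_diff A b x)).
have detH := pd_det_neq0 pdH.
have uH : H \in unitmx by rewrite unitmxE unitfE.
set B0 := invmx H.
have B0H : B0 *m H = 1%:M := mulVmx uH.
set T0 := \tr B0.
have T00 : 0 <= T0 by apply: tr_ge0; exact: inv_pd pdH B0H.
set a := \tr A.
have a0 : 0 <= a by exact: tr_ge0.
pose Inv (k : nat) (M : 'M[R]_n) := [/\ sym_pd M, \det M != 0, `|\det M| * 2 ^+ k <= `|\det H| &
   exists B, B *m M = 1%:M /\ \tr B <= T0 + k%:R * a].
have main : forall k, (exists i, quad A b c (x - iter i F H *m g) < quad A b c x)
    \/ Inv k (iter k F H).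
  elim=> [|k IH].
    right; split => //; first by rewrite expr0 mulr1.
    by exists B0; split => //; rewrite mul0r addr0.
  case: IH => [ex|[pdk dk dk2 [Bk [BkH trBk]]]]; first by left.
  case: (boolP (quad A b c (x - iter k F H *m g) < quad A b c x)) => [lt|nlt].
    by left; exists k.
  right.
  rewrite -leNgt quad_step ?pdA.1 // vdotNr in nlt.
  have fail : 2 * vdot g (iter k F H *m g) <=
      vdot (- (iter k F H *m g)) (A *m - (iter k F H *m g)) by lra.
  have [pd' dn' d2' [Bp [BpH trBp]]] := step' pdA pdk BkH g0 dk fail.
  rewrite iterS eF; split => //.
    rewrite exprS mulrA (mulrC _ 2).
    apply: le_trans dk2; rewrite ler_wpM2r // exprn_ge0 //.
  exists Bp; split => //.
  rewrite -natr1 mulrDl mul1r; lra.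
pose N := #|{perm 'I_n}|.
have [k hk] := growth n (mulr_ge0 (normr_ge0 (\det H)) (ler0n R N)) T00 a0.
case: (main k) => [//|[pdk dk dk2 [Bk [BkH trBk]]]].
exfalso.
have pdB := inv_pd pdk BkH.
set t := T0 + k%:R * a in trBk hk.
have hb : `|\det Bk| <= t ^+ n *+ N.
  apply: le_trans (det_bound (c := \tr Bk) _) _.
    by move=> i j; exact: entry_le_tr.
  apply: ler_wMn2r; apply: lerXn2r => //; rewrite ?nnegrE //; first exact: tr_ge0.
  by rewrite /t addr_ge0 // mulr_ge0.
have e1 : `|\det Bk| * `|\det (iter k F H)| = 1.
  by rewrite -normrM -det_mulmx BkH det1 normr1.
have P0 := normr_ge0 (\det Bk).
have Q0 := normr_ge0 (\det (iter k F H)).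
have t0 : 0 <= t ^+ n by apply: exprn_ge0; rewrite /t addr_ge0 // mulr_ge0.
have two0 : 0 <= (2 : R) ^+ k by apply: exprn_ge0.
move: hb; rewrite -mulr_natr => hb.
have : (2 : R) ^+ k <= `|\det Bk| * `|\det H|.
  have := ler_wpM2l P0 dk2.
  by rewrite mulrA e1 mul1r.
move=> h2.
have h3 : `|\det Bk| * `|\det H| <= t ^+ n * N%:R * `|\det H|.
  by rewrite ler_wpM2r.
have h4 := le_trans h2 h3.
have e : t ^+ n * N%:R * `|\det H| = `|\det H| * N%:R * t ^+ n by ring.
rewrite e in h4.
by have := lt_le_trans hk h4; rewrite ltxx.
Qed.
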